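(* Let $K$ and $K_1,\dots,K_N$ be knots in $S^3$ with groups $\pi=\pi_1(S^3\setminus K)$, $\pi_i=\pi_1(S^3\setminus K_i)$ and standard meridian–longitude pairs $(m,l)$, $(m_i,l_i)$. Suppose each $K_i$ satisfies the Brumfiel–Hilden condition and that for each $i$ there is a surjective group homomorphism $f_i:\pi_i\to\pi$ with $f_i(m_i)=m$ and $f_i(l_i)=l^{d_i}$ for some $d_i\in\mathbb{Z}$. If the integers $d_1,\dots,d_N$ generate $\mathbb{Z}$ as a group, then $K$ satisfies the Brumfiel–Hilden condition.
   Context: For a group $\pi$, the Brumfiel–Hilden algebra is $H[\pi]:=\mathbb{C}[\pi]/I$, where $I$ is the two-sided ideal of the group algebra generated by all elements $g(h+h^{-1})-(h+h^{-1})g$ with $g,h\in\pi$. $H^+[\pi]\subset H[\pi]$ is the subalgebra generated by the images of all $g+g^{-1}$, $g\in\pi$. For an element $X\in H[\pi]$ which is the image of a group element, $H^+[\pi][X^{\pm1}]$ denotes the subalgebra of $H[\pi]$ generated by $H^+[\pi]$, $X$ and $X^{-1}$. A knot $K\subset S^3$ with group $\pi=\pi_1(S^3\setminus K)$ and standard (commuting) meridian $m$ and longitude $l$ is said to satisfy the Brumfiel–Hilden condition if the image $Y$ of $l$ in $H[\pi]$ lies in $H^+[\pi][X^{\pm1}]$, where $X$ is the image of $m$. *)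

(* Defs.v *)
From HB Require Import structures.
From mathcomp Require Import all_boot all_order all_algebra.
Set Implicit Arguments. Unset Strict Implicit. Unset Printing Implicit Defensive.
Import GRing.Theory.
Local Open Scope ring_scope.

Definition zexpg (G : groupType) (x : G) (z : int) : G :=
  match z with
  | Posz n => (x ^+ n)%g
  | Negz n => (x ^- n.+1)%g
  end.

Section GroupAlgebra.
Variables (F : fieldType) (G : groupType).

(* Elements of the group algebra F[G], represented by formal finite sums
   sum_k c_k g_k; two formal sums denote the same element of F[G] iff
   they have the same coefficient function [fs_coef]. *)
Definition fsum := seq (F * G).

Definition fs_coef (s : fsum) (g : G) : F :=
  \sum_(p <- s) (if p.2 == g then p.1 else 0).

Definition fs_add (s t : fsum) : fsum := s ++ t.
Definition fs_scale (c : F) (s : fsum) : fsum := [seq (c * p.1, p.2) | p <- s].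
Definition fs_sub (s t : fsum) : fsum := s ++ fs_scale (-1) t.
Definition fs_mul (s t : fsum) : fsum :=
  [seq (p.1 * q.1, (p.2 * q.2)%g) | p <- s, q <- t].
Definition fs_one : fsum := [:: (1, 1%g)].
Definition fs_of (g : G) : fsum := [:: (1, g)].

Definition fs_sym (g : G) : fsum := fs_add (fs_of g) (fs_of (g^-1)%g).

Definition bh_gen (g h : G) : fsum :=
  fs_sub (fs_mul (fs_of g) (fs_sym h)) (fs_mul (fs_sym h) (fs_of g)).

Inductive in_bh_ideal : fsum -> Prop :=
| bhI_gen g h : in_bh_ideal (bh_gen g h)
| bhI_add x y : in_bh_ideal x -> in_bh_ideal y -> in_bh_ideal (fs_add x y)
| bhI_mull a x : in_bh_ideal x -> in_bh_ideal (fs_mul a x)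
| bhI_mulr x a : in_bh_ideal x -> in_bh_ideal (fs_mul x a)
| bhI_ext x y : in_bh_ideal x -> fs_coef x =1 fs_coef y -> in_bh_ideal y.

(* Preimage in F[G] of the subalgebra H^+[G][X^{+-1}] of H[G] = F[G]/I,
   i.e. of the subalgebra generated by the images of all g + g^-1 and of
   X = [m], X^-1 = [m^-1]:  x is in it iff the image of x in H[G] is. *)
Inductive in_Hplus_X (m : G) : fsum -> Prop :=
| HX_sym g : in_Hplus_X m (fs_sym g)
| HX_X : in_Hplus_X m (fs_of m)
| HX_Xinv : in_Hplus_X m (fs_of (m^-1)%g)
| HX_one : in_Hplus_X m fs_one
| HX_add x y : in_Hplus_X m x -> in_Hplus_X m y -> in_Hplus_X m (fs_add x y)
| HX_mul x y : in_Hplus_X m x -> in_Hplus_X m y -> in_Hplus_X m (fs_mul x y)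
| HX_scale c x : in_Hplus_X m x -> in_Hplus_X m (fs_scale c x)
| HX_modI x y : in_Hplus_X m x -> in_bh_ideal (fs_sub y x) -> in_Hplus_X m y.

(* Brumfiel--Hilden condition for (group, meridian m, longitude l):
   the image Y of l in H[G] lies in H^+[G][X^{+-1}], X the image of m. *)
Definition BH_condition (m l : G) : Prop := in_Hplus_X m (fs_of l).

End GroupAlgebra.

Definition generate_Z (N : nat) (d : 'I_N -> int) : Prop :=
  exists c : 'I_N -> int, (\sum_(i < N) c i * d i)%R = 1%R.

(* Main.v *)
Require Import Defs.
From HB Require Import structures.
From mathcomp Require Import all_boot all_order all_algebra.
From mathcomp Require Import zify.
Set Implicit Arguments. Unset Strict Implicit. Unset Printing Implicit Defensive.
Import GRing.Theory.

Section Helpers.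
Local Open Scope ring_scope.
Variables (F : fieldType) (G : groupType).

Lemma coef_cat (s t : fsum F G) g : fs_coef (s ++ t) g = fs_coef s g + fs_coef t g.
Proof. by rewrite /fs_coef big_cat. Qed.

Lemma coef_scale c (s : fsum F G) g : fs_coef (fs_scale c s) g = c * fs_coef s g.
Proof.
rewrite /fs_coef /fs_scale big_map mulr_sumr; apply: eq_bigr => p _ /=.
by case: ifP; rewrite ?mulr0.
Qed.

Lemma nil_ideal : @in_bh_ideal F G [::].
Proof. exact: (@bhI_mull F G [::] _ (@bhI_gen F G 1%g 1%g)). Qed.

Lemma zero_ideal (s : fsum F G) : fs_coef s =1 (fun _ => 0) -> in_bh_ideal s.
Proof.
move=> H; apply: (bhI_ext nil_ideal) => g; by rewrite H /fs_coef big_nil.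
Qed.

Lemma HX_ext m (x y : fsum F G) : in_Hplus_X m x -> fs_coef x =1 fs_coef y ->
  in_Hplus_X m y.
Proof.
move=> Hx E; apply: (HX_modI Hx); apply: zero_ideal => g.
by rewrite /fs_sub coef_cat coef_scale E mulN1r subrr.
Qed.

End Helpers.

Section Map.
Local Open Scope ring_scope.
Variables (F : fieldType) (G H : groupType) (h : G -> H).
Hypothesis hM : forall x y : G, h (x * y)%g = (h x * h y)%g.

Lemma h1 : h 1%g = 1%g.
Proof.
have E : (1 * h 1 = h 1 * h 1)%g by rewrite mul1g -hM mulg1.
by apply: esym; apply: (@mulIg H (h 1%g)).
Qed.

Lemma hV g : h (g^-1)%g = (h g)^-1%g.
Proof. apply/esym/mulg1_eq; by rewrite -hM mulgV h1. Qed.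

Definition fmap (s : fsum F G) : fsum F H := [seq (p.1, h p.2) | p <- s].

Lemma fmap_cat s t : fmap (s ++ t) = fmap s ++ fmap t.
Proof. exact: map_cat. Qed.

Lemma fmap_scale c s : fmap (fs_scale c s) = fs_scale c (fmap s).
Proof. by rewrite /fmap /fs_scale -!map_comp. Qed.

Lemma fmap_mul s t : fmap (fs_mul s t) = fs_mul (fmap s) (fmap t).
Proof.
rewrite /fs_mul /fmap; elim: s => [|p s IH] //=.
rewrite map_cat IH -!map_comp; congr (_ ++ _); apply: eq_map => q /=.
by rewrite hM.
Qed.

Lemma fmap_of g : fmap (fs_of F g) = fs_of F (h g).
Proof. by []. Qed.

Lemma fmap_sym g : fmap (fs_sym F g) = fs_sym F (h g).
Proof. by rewrite /fs_sym /fs_add fmap_cat !fmap_of hV. Qed.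

Lemma fmap_gen g g' : fmap (bh_gen F g g') = bh_gen F (h g) (h g').
Proof.
by rewrite /bh_gen /fs_sub fmap_cat fmap_scale !fmap_mul fmap_sym fmap_of.
Qed.

Lemma coef_fmap (L : seq G) s y : uniq L -> {subset map snd s <= L} ->
  fs_coef (fmap s) y = \sum_(g <- L | h g == y) fs_coef s g.
Proof.
move=> uL; elim: s => [|p s IH] sub.
  by rewrite /fs_coef big_nil big1 // => g _; rewrite big_nil.
have pL : p.2 \in L by apply: sub; rewrite inE eqxx.
have sL : {subset map snd s <= L} by move=> x xs; apply: sub; rewrite inE xs orbT.
rewrite /fmap map_cons -/(fmap s) {1}/fs_coef big_cons -/(fs_coef (fmap s) y) IH //=.
under [RHS]eq_bigr => g _ do rewrite /fs_coef big_cons -/(fs_coef s g).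
rewrite big_split /=; congr (_ + _).
rewrite big_mkcond (bigD1_seq p.2) //= eqxx big1 ?addr0 // => g gp.
have -> : (p.2 == g) = false by apply/negbTE; rewrite eq_sym.
by case: ifP.

Qed.

Lemma fmap_ext s t : fs_coef s =1 fs_coef t -> fs_coef (fmap s) =1 fs_coef (fmap t).
Proof.
move=> E y; set L := undup (map snd (s ++ t)).
have uL : uniq L by apply: undup_uniq.
rewrite (@coef_fmap L) // ?(@coef_fmap L t) //; first by apply: eq_bigr => g _; rewrite E.
  by move=> x xs; rewrite mem_undup map_cat mem_cat xs orbT.
by move=> x xs; rewrite mem_undup map_cat mem_cat xs.
Qed.

Lemma fmap_ideal x : in_bh_ideal x -> in_bh_ideal (fmap x).
Proof.
elim => {x} [g g'|x y _ IHx _ IHy|a x _ IH|x a _ IH|x y _ IH E].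
- rewrite fmap_gen; exact: bhI_gen.
- rewrite /fs_add fmap_cat; exact: bhI_add.
- rewrite fmap_mul; exact: bhI_mull.
- rewrite fmap_mul; exact: bhI_mulr.
- exact: (bhI_ext IH (fmap_ext E)).
Qed.

Lemma fmap_HX m x : in_Hplus_X m x -> in_Hplus_X (h m) (fmap x).
Proof.
elim => {x} [g||||x y _ IHx _ IHy|x y _ IHx _ IHy|c x _ IH|x y _ IH I].
- rewrite fmap_sym; exact: HX_sym.
- exact: HX_X.
- rewrite fmap_of hV; exact: HX_Xinv.
- rewrite /fs_one -/(fs_of F (1%g : G)) fmap_of h1; exact: HX_one.
- rewrite /fs_add fmap_cat; exact: HX_add.
- rewrite fmap_mul; exact: HX_mul.
- rewrite fmap_scale; exact: HX_scale.
- apply: (HX_modI IH); move: (fmap_ideal I).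
  by rewrite /fs_sub fmap_cat fmap_scale.
Qed.

End Map.


Section Zexp.
Variables (G : groupType) (l : G).
Local Open Scope ring_scope.

Lemma zexpS z : zexpg l (z + 1) = (zexpg l z * l)%g.
Proof.
case: z => [n|[|k]] /=.
- by rewrite addn1 expgSr.
- by rewrite mulVg.
  rewrite subSS subn0.
  by rewrite /= [in RHS]expgS invgM mulgVK.
Qed.

Lemma zexpP z : zexpg l (z - 1) = (zexpg l z * l^-1)%g.
Proof.
case: z => [[|n]|n].
- by rewrite /= mul1g.
- have -> : Posz n.+1 - 1 = Posz n by lia.
  by rewrite /= expgSr mulgK.
- have -> : Negz n - 1 = Negz n.+1 by rewrite !NegzE; lia.
  by rewrite /= [in LHS]expgS invgM.
Qed.

Lemma zexpD a b : zexpg l (a + b) = (zexpg l a * zexpg l b)%g.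
Proof.
elim/int_ind: b => [|n IH|n IH].
- by rewrite addr0 /= mulg1.
- rewrite -addn1 PoszD addrA zexpS IH -mulgA -zexpS; by [].
- have -> : a + - (n.+1)%:Z = (a + - n%:Z) - 1 by rewrite -addn1 PoszD opprD addrA.
  rewrite zexpP IH -mulgA -zexpP; congr (_ * _)%g.
  congr zexpg; lia.
Qed.

Lemma zexpN a : zexpg l (- a) = (zexpg l a)^-1%g.
Proof.
apply: esym; apply: mulg1_eq; by rewrite -zexpD subrr.
Qed.

End Zexp.

Theorem mainTheorem5 (F : fieldType) (G : groupType) (m l : G)
  (N : nat) (Gi : 'I_N -> groupType) (mi li : forall i, Gi i)
  (f : forall i, Gi i -> G) (d : 'I_N -> int) :
  commute m l ->
  (forall i, commute (mi i) (li i)) ->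
  (forall i, BH_condition F (mi i) (li i)) ->
  (forall i (x y : Gi i), f i (x * y)%g = (f i x * f i y)%g) ->
  (forall i (y : G), exists x : Gi i, f i x = y) ->
  (forall i, f i (mi i) = m) ->
  (forall i, f i (li i) = zexpg l (d i)) ->
  generate_Z d ->
  BH_condition F m l.
Proof.
move=> _ _ BH hom surj fm fl [c Hc].
pose P := fun z : int => in_Hplus_X m (fs_of F (zexpg l z)).
have Pd i : P (d i).
  move: (fmap_HX (hom i) (BH i)); by rewrite fmap_of fm fl.
have PM a b : P a -> P b -> P (a + b)%R.
  rewrite /P zexpD => Ha Hb; have := HX_mul Ha Hb.
  by rewrite /fs_mul /= mulr1.
have PN a : P a -> P (- a)%R.
  rewrite /P zexpN => Ha.
  apply: (HX_ext (HX_add (@HX_sym F G m (zexpg l a)) (HX_scale (-1) Ha))) => g.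
  rewrite /fs_coef /= !big_cons !big_nil.
  case: eqP => _; case: eqP => _ /=; rewrite ?mulr1 ?addr0 ?add0r ?mulN1r ?subrr //.
all: try by rewrite addrC addrA addNr add0r.
all: try by rewrite subrr.
all: try by rewrite addr0.
have P0 : P 0%R by exact: HX_one.
have PZ z a : P a -> P (z * a)%R.
  move=> Pa; elim/int_ind: z => [|n IH|n IH].
  - by rewrite mul0r.
  - by rewrite intS mulrDl mul1r; apply: PM.
  - by rewrite intS opprD mulrDl mulN1r; apply: PM => //; apply: PN.
have P1 : P 1%R.
  rewrite -Hc; elim/big_ind: _ => //. move=> i _; exact: PZ.
have E1 : zexpg l 1%R = l by [].
by move: P1; rewrite /P E1.
Qed.
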